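(* Let $T$ be a compact Hausdorff space, $C(T)$ the ring of real-valued continuous functions on $T$, $\mathcal{I} = [0,1]$, and $n \geq 1$. Let $H : T \times \mathcal{I} \to S^{n-1}$ be continuous, and let $v_0, v_1 \in C(T)^n$ be the unimodular rows whose coordinate functions are the components of $H(\cdot, 0)$ and $H(\cdot, 1)$ respectively. Then there exists $\alpha \in SL_n(C(T))$ which can be connected to the identity matrix and satisfies $\alpha v_0^t = v_1^t$.
   Context: A continuous map $f = (f_1, \ldots, f_n) : T \to S^{n-1}$ gives a unimodular row $(f_1, \ldots, f_n)$ over $C(T)$ (since $\sum f_i^2 = 1$). A matrix $\alpha \in SL_n(C(T))$ ''can be connected to the identity'' means there is $\beta(X) \in SL_n(C(T)[X])$ with $\beta(0) = I_n$ and $\beta(1) = \alpha$. *)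

(* Defs.v *)
From HB Require Import structures.
From mathcomp Require Import all_boot all_order all_algebra.
From mathcomp Require Import all_classical all_reals all_analysis.
Set Implicit Arguments. Unset Strict Implicit. Unset Printing Implicit Defensive.
Import Order.TTheory GRing.Theory Num.Theory.
Import numFieldNormedType.Exports.
Local Open Scope ring_scope.
Local Open Scope classical_set_scope.

(* C(T) is realised as the subring of continuous functions inside the
   (commutative, nontrivial for pointed T) ring of all functions T -> R
   (ring structure of mathcomp-analysis 'functions.v'). *)

Section CT.
Variables (T : ptopologicalType) (R : realType).

Definition isCT (f : T -> R) : Prop := continuous f.

Definition CT_mx n (a : 'M[T -> R]_n) : Prop := forall i j, isCT (a i j).

Definition SL_CT n (a : 'M[T -> R]_n) : Prop := CT_mx a /\ \det a = 1.

Definition isCTpoly (p : {poly T -> R}) : Prop := forall k, isCT p`_k.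

Definition SL_CTpoly n (b : 'M[{poly T -> R}]_n) : Prop :=
  (forall i j, isCTpoly (b i j)) /\ \det b = 1.

Definition connected_to_id n (a : 'M[T -> R]_n) : Prop :=
  exists b : 'M[{poly T -> R}]_n,
    SL_CTpoly b /\ map_mx (fun p => p.[0]) b = 1%:M
                /\ map_mx (fun p => p.[1]) b = a.

End CT.

(* Main.v *)
Require Import Defs.
From HB Require Import structures.
From mathcomp Require Import all_boot all_order all_algebra.
From mathcomp Require Import all_classical all_reals all_analysis.
Import Order.TTheory GRing.Theory Num.Theory.
Import numFieldNormedType.Exports.
Local Open Scope ring_scope.
Local Open Scope classical_set_scope.
From mathcomp Require Import ring lra.
Lemma det_transvection (R : comPzRingType) n (a : 'cV[R]_n) (b : 'rV[R]_n) :
  b *m a = 0 -> \det (1%:M + a *m b) = 1.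
Proof.
move=> ba0.
pose M := block_mx (1%:M : 'M[R]_n) (- a) b (1%:M : 'M[R]_1).
have e1 : M = block_mx 1%:M 0 b 1%:M *m block_mx 1%:M (-a) 0 (1%:M : 'M[R]_1).
  rewrite mulmx_block !mulmx1 !mul1mx ?mulmx0 ?mul0mx ?addr0 ?add0r.
  by rewrite mulmxN ba0 oppr0 add0r.
have e2 : M = block_mx (1%:M + a *m b) (-a) 0 (1%:M : 'M[R]_1) *m block_mx 1%:M 0 b 1%:M.
  rewrite mulmx_block !mulmx1 !mul1mx ?mulmx0 ?mul0mx ?addr0 ?add0r.
  by rewrite mulNmx addrK.
have := congr1 determinant e2; rewrite {1}e1 !det_mulmx ?det_lblock ?det_ublock.
by rewrite !det1 !mulr1 => /esym.
Qed.
Section Alg.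
Variables (T : ptopologicalType) (R : realType).
Local Notation F := (T -> R).

Lemma isCT_cst (c : R) : isCT (fun _ : T => c).
Proof. move=> x; exact: cst_continuous. Qed.
Lemma isCT0 : isCT (0 : F). Proof. exact: isCT_cst. Qed.
Lemma isCT1 : isCT (1 : F). Proof. exact: isCT_cst. Qed.
Lemma isCTD (f g : F) : isCT f -> isCT g -> isCT (f + g).
Proof. move=> cf cg x; exact: (continuousD (cf x) (cg x)). Qed.
Lemma isCTM (f g : F) : isCT f -> isCT g -> isCT (f * g).
Proof. move=> cf cg x; exact: (continuousM (cf x) (cg x)). Qed.
Lemma isCT_sum (I : Type) (r : seq I) (P : pred I) (f : I -> F) :
  (forall i, isCT (f i)) -> isCT (\sum_(i <- r | P i) f i).
Proof. move=> cf; apply: big_ind => //; [exact: isCT0|exact: isCTD]. Qed.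
Lemma isCT_nat (b : bool) : isCT (b%:R : F).
Proof. by case: b; [exact: isCT1|exact: isCT0]. Qed.

Lemma isCTpoly0 : isCTpoly (0 : {poly F}).
Proof. by move=> k; rewrite coef0; exact: isCT0. Qed.
Lemma isCTpolyC (c : F) : isCT c -> isCTpoly c%:P.
Proof. by move=> cc k; rewrite coefC; case: (k == 0)%N => //; exact: isCT0. Qed.
Lemma isCTpolyX : isCTpoly ('X : {poly F}).
Proof. by move=> k; rewrite coefX; exact: isCT_nat. Qed.
Lemma isCTpoly_nat (b : bool) : isCTpoly (b%:R : {poly F}).
Proof. by case: b => k; rewrite ?coef1 ?coef0; [exact: isCT_nat|exact: isCT0]. Qed.
Lemma isCTpolyD (p q : {poly F}) : isCTpoly p -> isCTpoly q -> isCTpoly (p + q).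
Proof. by move=> cp cq k; rewrite coefD; exact: isCTD. Qed.
Lemma isCTpolyM (p q : {poly F}) : isCTpoly p -> isCTpoly q -> isCTpoly (p * q).
Proof.
move=> cp cq k; rewrite coefM; apply: isCT_sum => i; exact: isCTM.
Qed.
Lemma isCTpoly_sum (I : Type) (r : seq I) (P : pred I) (f : I -> {poly F}) :
  (forall i, isCTpoly (f i)) -> isCTpoly (\sum_(i <- r | P i) f i).
Proof. move=> cf; apply: big_ind => //; [exact: isCTpoly0|exact: isCTpolyD]. Qed.

Definition good n (a : 'M[F]_n) := SL_CT a /\ connected_to_id a.
Arguments good {n}.

Lemma good1 n : good (1%:M : 'M[F]_n).
Proof.
split; first split.
- by move=> i j; rewrite mxE; exact: isCT_nat.
- exact: det1.
rewrite /connected_to_id; exists 1%:M; split; first split.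
- by move=> i j; rewrite mxE; exact: isCTpoly_nat.
- exact: det1.
by split; apply/matrixP => i j; rewrite !mxE hornerMn hornerC.
Qed.

Lemma goodM n (a1 a2 : 'M[F]_n) : good a1 -> good a2 -> good (a1 *m a2).
Proof.
move=> [[c1 d1] [b1 [[cb1 db1] [e01 e11]]]] [[c2 d2] [b2 [[cb2 db2] [e02 e12]]]].
split; first split.
- by move=> i j; rewrite mxE; apply: isCT_sum => k; exact: isCTM.
- by rewrite det_mulmx d1 d2 mulr1.
rewrite /connected_to_id; exists (b1 *m b2); split; first split.
- by move=> i j; rewrite mxE; apply: isCTpoly_sum => k; exact: isCTpolyM.
- by rewrite det_mulmx db1 db2 mulr1.
have ev x : map_mx (fun p => p.[x]) (b1 *m b2) =
   map_mx (fun p => p.[x]) b1 *m map_mx (fun p => p.[x]) b2.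
  apply/matrixP => i j; rewrite !mxE horner_sum; apply: eq_bigr => k _.
  by rewrite !mxE hornerM.
by rewrite !ev e01 e02 e11 e12 mulmx1.
Qed.

Lemma good_transv n (a : 'cV[F]_n) (b : 'rV[F]_n) :
  (forall i, isCT (a i 0)) -> (forall j, isCT (b 0 j)) -> b *m a = 0 ->
  good (1%:M + a *m b).
Proof.
move=> ca cb ba0; split; first split.
- move=> i j; rewrite !mxE; apply: isCTD; first exact: isCT_nat.
  by apply: isCT_sum => k; rewrite !ord1; exact: isCTM.
- exact: det_transvection.
rewrite /connected_to_id; exists (1%:M + ('X *: map_mx polyC a) *m map_mx polyC b); split; first split.
- move=> i j; rewrite !mxE; apply: isCTpolyD; first exact: isCTpoly_nat.
  apply: isCTpoly_sum => k; rewrite !mxE !ord1.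
  by apply: isCTpolyM; [apply: isCTpolyM; [exact: isCTpolyX|]|]; apply: isCTpolyC.
- apply: det_transvection.
  by rewrite -scalemxAr -map_mxM ba0 map_mx0 scaler0.
split; apply/matrixP => i j; rewrite !mxE hornerD horner_sum hornerMn hornerC.
- rewrite big1 ?addr0 // => k _; by rewrite !mxE !hornerE.
- by rewrite (eq_bigr (fun k => a i k * b k j)) // => k _; rewrite !mxE !hornerE.
Qed.

Lemma sum_at (I : Type) (r : seq I) (P : pred I) (f : I -> F) (t : T) :
  (\sum_(i <- r | P i) f i) t = \sum_(i <- r | P i) f i t.
Proof. by rewrite fct_sumE. Qed.

Lemma step n (u w : 'cV[F]_n) :
  (forall i, isCT (u i 0)) -> (forall i, isCT (w i 0)) ->
  (forall t, \sum_i (u i 0 t) ^+ 2 = 1) -> (forall t, \sum_i (w i 0 t) ^+ 2 = 1) ->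
  (forall t, 0 < 1 + \sum_i u i 0 t * w i 0 t) ->
  exists E, good E /\ E *m u = w.
Proof.
move=> cu cw nu nw pos.
pose d := fun t => \sum_i u i 0 t * w i 0 t.
have cd : isCT d.
  have -> : d = \sum_i (u i 0 * w i 0) by rewrite fct_sumE.
  by apply: isCT_sum => i; exact: isCTM.
have dn0 t : 1 + d t != 0 by rewrite gt_eqF // pos.
pose a := \col_i (fun t => (w i 0 t - u i 0 t) * (1 + d t)^-1).
pose b := (u + w)^T.
exists (1%:M + a *m b); split.
  apply: good_transv.
  - move=> i; rewrite mxE => x.
    apply: (continuousM (continuousB (cw i x) (cu i x))).
    apply: continuousV; first exact: dn0.
    exact: (continuousD (isCT_cst 1 x) (cd x)).
  - by move=> j; rewrite !mxE; apply: isCTD.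
  - apply/matrixP => i j; rewrite !ord1 !mxE; apply/funext => t.
    rewrite sum_at.
    transitivity (\sum_k ((w k 0 t)^+2 - (u k 0 t)^+2) * (1 + d t)^-1).
      by apply: eq_bigr => k _; rewrite !mxE /=; rewrite mulrfctE /= addrfctE /=; ring.
    by rewrite -mulr_suml sumrB nu nw subrr mul0r.
rewrite mulmxDl mul1mx -mulmxA; apply/matrixP => i j; rewrite ord1 !mxE big_ord1 !mxE.
apply/funext => t; rewrite addrfctE mulrfctE /= sum_at.
have -> : \sum_(j0 < n) (b ord0 j0 * u j0 0) t = 1 + d t.
  rewrite /d -(nu t) -big_split /=; apply: eq_bigr => k _.
  by rewrite !mxE mulrfctE addrfctE /=; ring.
by rewrite mulrAC -mulrA divff // mulr1 addrC subrK.
Qed.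
End Alg.
Arguments good {T R n}.
Arguments good1 {T R n}.
Arguments goodM {T R n a1 a2}.
Arguments step {T R n u w}.
Lemma Lloc (R : realType) (T : ptopologicalType) n (H : T * R -> 'rV[R]_n)
 (H_cont : {within [set p : T * R | p.2 \in `[0, 1]], continuous H}) (t : T) (s0 : R)
 (hs0 : s0 \in `[0,1]) (e : R) (e0 : 0 < e) :
 exists U V, nbhs t U /\ nbhs s0 V /\ forall t' s, U t' -> V s -> s \in `[0,1] ->
   forall i, `|H (t,s0) 0 i - H (t',s) 0 i| < e.
Proof.
have /subspace_continuousP hc := H_cont.
have := hc (t,s0) hs0.
move=> /cvg_ball /(_ e e0).
rewrite /within /=.
case=> [[U V]] /= [nU nV] sub.
exists U, V; split=>//; split=>// t' s Ut' Vs hs i.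
have := sub (t',s) (conj Ut' Vs) hs.
case=> _ /(_ 0 i). done.
Qed.
Arguments Lloc {R T n H}.

Lemma entry_cont (R : realType) (T : ptopologicalType) n (H : T * R -> 'rV[R]_n)
 (H_cont : {within [set p : T * R | p.2 \in `[0, 1]], continuous H}) (s : R)
 (hs : s \in `[0,1]) i : continuous (fun t => H (t,s) 0 i).
Proof.
move=> t; apply/cvgrPdist_lt => e e0.
have [U [V [nU [nV h]]]] := Lloc H_cont t s hs e e0.
apply: filterS nU => t' Ut'.
exact: h Ut' (nbhs_singleton nV) hs i.
Qed.

Lemma tube (R : realType) (T : ptopologicalType) (T_compact : compact [set: T])
 n (n_ge1 : (1 <= n)%N) (H : T * R -> 'rV[R]_n)
 (H_cont : {within [set p : T * R | p.2 \in `[0, 1]], continuous H}) (s0 : R)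
 (hs0 : s0 \in `[0,1]) :
 \forall s \near s0, s \in `[0,1] -> forall t,
    \sum_i (H (t,s0) 0 i - H (t,s) 0 i) ^+ 2 < 4.
Proof.
pose e : R := (n%:R + 1)^-1.
have e0 : 0 < e by rewrite invr_gt0 ltr_wpDl.
have /compact_near_coveringP cov := T_compact.
pose P := fun s t => s \in `[0,1] ->
   \sum_i (H (t,s0) 0 i - H (t,s) 0 i) ^+ 2 < 4.
suff hc : forall t, [set: T] t -> \forall x' \near t & i \near nbhs s0, P i x'.
  by apply: filterS (cov R (nbhs s0) P _ hc) => s hW hs t; exact: hW.
- move=> t _.
  have [U [V [nU [nV h]]]] := Lloc H_cont t s0 hs0 e e0.
  exists (U,V) => //= -[t' s] /= [Ut' Vs] hs.
  apply: (le_lt_trans (y := \sum_(i < n) (2 * e) ^+ 2)).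
    apply: ler_sum => i _.
    have h1 := h t' s0 Ut' (nbhs_singleton nV) hs0 i.
    have h2 := h t' s Ut' Vs hs i.
    move: h1 h2; rewrite !ltr_norml => /andP[a1 a2] /andP[b1 b2].
    nra.
  rewrite sumr_const card_ord -mulr_natr.
  have eN : e * (n%:R + 1) = 1 by rewrite mulVf // gt_eqF // ltr_wpDl.
  have N0 : 0 <= n%:R :> R by [].
  nra.
Qed.
Arguments entry_cont {R T n H}.
Arguments tube {R T} T_compact {n} n_ge1 {H}.

Theorem theorem3p5 (R : realType) (T : ptopologicalType)
  (T_compact : compact [set: T]) (T_hausdorff : hausdorff_space T)
  (n : nat) (n_ge1 : (1 <= n)%N)
  (H : T * R -> 'rV[R]_n)
  (H_cont : {within [set p : T * R | p.2 \in `[0, 1]], continuous H})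
  (H_sphere : forall (t : T) (s : R), s \in `[0, 1] ->
                \sum_(i < n) (H (t, s) 0 i) ^+ 2 = 1) :
  let v0 : 'rV[T -> R]_n := \row_i (fun t => H (t, 0) 0 i) in
  let v1 : 'rV[T -> R]_n := \row_i (fun t => H (t, 1) 0 i) in
  exists alpha : 'M[T -> R]_n,
    SL_CT alpha /\ connected_to_id alpha /\ alpha *m v0^T = v1^T.
Proof.
move=> v0 v1.
pose A := [set x : R | x \in `[0,1]].
pose U := fun s : R => (\col_i (fun t => H (t,s) 0 i) : 'cV[T -> R]_n).
pose P := fun s => exists E : 'M[T -> R]_n, good E /\ E *m U 0 = U s.
have cU : forall s, A s -> forall i, isCT (U s i 0).
  by move=> s hs i; rewrite mxE; exact: (entry_cont H_cont s hs i).
have nU : forall s, A s -> forall t, \sum_i (U s i 0 t) ^+ 2 = 1.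
  move=> s hs t; rewrite -(H_sphere t s hs); apply: eq_bigr => i _; by rewrite mxE.
have fw : forall s s', A s -> A s' -> P s ->
    (forall t, \sum_i (H (t,s) 0 i - H (t,s') 0 i) ^+ 2 < 4) -> P s'.
  move=> s s' hs hs' [E0 [g0 e0]] hb.
  have [E [gE eE]] : exists E, good E /\ E *m U s = U s'.
    apply: (step (cU s hs) (cU s' hs') (nU s hs) (nU s' hs')) => t.
    have ex : \sum_i (H (t,s) 0 i - H (t,s') 0 i) ^+ 2 =
       \sum_i (U s i 0 t) ^+ 2 + \sum_i (U s' i 0 t) ^+ 2
       - 2 * \sum_i U s i 0 t * U s' i 0 t.
      rewrite -big_split /= mulr_sumr -sumrB; apply: eq_bigr => i _; rewrite !mxE; ring.
    have := hb t; rewrite ex (nU s hs t) (nU s' hs' t) => h; lra.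
  by exists (E *m E0); split; [exact: goodM | rewrite -mulmxA e0].
have sym : forall s s' t, \sum_i (H (t,s) 0 i - H (t,s') 0 i) ^+ 2 =
                          \sum_i (H (t,s') 0 i - H (t,s) 0 i) ^+ 2.
  by move=> s s' t; apply: eq_bigr => i _; rewrite -sqrrN opprB.
have cA : connected A.
  apply/connected_intervalP => x y hx hy z /andP[xz zy]; move: hx hy; rewrite /A /= !in_setE /= !in_itv /=.
  move=> /andP[x0 _] /andP[_ y1]; apply/andP; split.
    exact: le_trans x0 xz.
  exact: le_trans zy y1.
have BA : [set s | A s /\ P s] = A.
  apply: cA.
  - exists 0; split; first by rewrite /A /= in_setE /= in_itv /= lexx ler01.
    by exists 1%:M; split; [exact: good1 | exact: mul1mx].
  - exists (interior [set s | A s -> P s]); first exact: open_interior.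
    apply/seteqP; split => s.
    + move=> [hs Ps]; split=> //.
      apply: filterS (tube T_compact n_ge1 H_cont s hs) => s' hb hs'.
      exact: fw s s' hs hs' Ps (hb hs').
    + by move=> [hs /nbhs_singleton h]; split => //; exact: h hs.
  - exists (closure [set s | A s /\ P s]); first exact: closed_closure.
    apply/seteqP; split => s.
    + by move=> Bs; split; [case: Bs | exact: subset_closure].
    + move=> [hs cl]; split=> //.
      have [s' [[hs' Ps'] hb]] := cl _ (tube T_compact n_ge1 H_cont s hs).
      apply: (fw s' s hs' hs Ps') => t; rewrite sym; exact: hb hs' t.
have [E [gE eE]] : P 1.
  have : A 1 by rewrite /A /= in_setE /= in_itv /= lexx ler01.
  by rewrite -BA => -[].
exists E; split; first exact: gE.1.
split; first exact: gE.2.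
have -> : v0^T = U 0 by apply/matrixP => i j; rewrite !mxE.
have -> : v1^T = U 1 by apply/matrixP => i j; rewrite !mxE.
exact: eE.
Qed.
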